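(* Let $Q\subset\mathbb{R}^n$ be compact and controlled invariant. Then $\lim_{\tau\searrow0}h_{\mathrm{rec}}(\tau,Q)=h_{\mathrm{inv}}(Q)$.
   Context: Control system $\dot x=f(x,u)$, $x\in\mathbb R^n$, $f$ locally Lipschitz, controls $u\in\mathcal U$ = piecewise continuous functions $\mathbb R_{\ge0}\to U$, $U\subset\mathbb R^m$ compact; $\xi(x,u,t)$ the solution; $N_\varepsilon(Q)=\{y:\exists x\in Q,\|x-y\|\le\varepsilon\}$; $\log$ base 2. Controlled invariant: for each $x\in Q$ some $u$ keeps $\xi(x,u,t)\in Q$ for all $t\ge0$. $S\subseteq\mathcal U$ is invariance $(T,\varepsilon,Q)$-spanning if for every $x\in Q$ some $u\in S$ has $\xi(x,u,t)\in N_\varepsilon(Q)$ for all $t\in[0,T]$; $r_{\mathrm{inv}}(T,\varepsilon,Q)$ minimal cardinality; $h_{\mathrm{inv}}(Q)=\lim_{\varepsilon\searrow0}\limsup_{T\to\infty}\frac1T\log r_{\mathrm{inv}}(T,\varepsilon,Q)$. A trajectory $\xi(x,u,\cdot)$ is $(T,\varepsilon,\tau,Q)$-recurrent ($T\ge\tau$) if for every $t\in[0,T-\tau]$ there is $t'\in[t,t+\tau]$ with $\xi(x,u,t')\in N_\varepsilon(Q)$. $S$ is recurrence $(T,\varepsilon,\tau,Q)$-spanning if for every $x\in Q$ some $u\in S$ makes $\xi(x,u,\cdot)$ $(T,\varepsilon,\tau,Q)$-recurrent; $r_{\mathrm{rec}}(T,\varepsilon,\tau,Q)$ minimal cardinality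 ($\infty$ if none); $h_{\mathrm{rec}}(\tau,Q)=\lim_{\varepsilon\searrow0}\limsup_{T\to\infty}\frac1T\log r_{\mathrm{rec}}(T,\varepsilon,\tau,Q)$. Standing assumption: for all $x\in Q,u\in\mathcal U$, $\xi(x,u,\cdot)$ is defined on $[0,\tau]$ and continuous in $x$. *)

(* Defs.v *)
From HB Require Import structures.
From mathcomp Require Import all_boot all_order all_algebra.
From mathcomp Require Import all_classical all_reals all_analysis.
Set Implicit Arguments. Unset Strict Implicit. Unset Printing Implicit Defensive.
Import Order.TTheory GRing.Theory Num.Theory.
Import numFieldNormedType.Exports.
Local Open Scope classical_set_scope.
Local Open Scope ring_scope.

Section ControlEntropy.
Variables (R : realType) (n m : nat).

Definition enorm (k : nat) (v : 'rV[R]_k) : R :=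
  Num.sqrt (\sum_(i < k) (v ord0 i) ^+ 2).

Definition locally_lipschitz (f : 'rV[R]_n -> 'rV[R]_m -> 'rV[R]_n) : Prop :=
  forall (x0 : 'rV[R]_n) (u0 : 'rV[R]_m), exists delta : R, exists L : R,
    0 < delta /\
    forall x y u v, enorm (x - x0) <= delta -> enorm (y - x0) <= delta ->
      enorm (u - u0) <= delta -> enorm (v - u0) <= delta ->
      enorm (f x u - f y v) <= L * (enorm (x - y) + enorm (u - v)).

(* piecewise continuous on R_{>=0}: on every [0,T] there is a finite partition
   0 = s_0 < ... < s_k = T such that on each open piece ]s_i, s_{i+1}[ the
   function agrees with a continuous function (hence is continuous there and
   has finite one-sided limits at the partition points) *)
Definition piecewise_continuous (u : R -> 'rV[R]_m) : Prop :=
  forall T : R, 0 < T -> exists (k : nat) (s : nat -> R),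
    s 0%N = 0 /\ s k = T /\ (forall i, (i < k)%N -> s i < s i.+1) /\
    forall i, (i < k)%N -> exists g : R -> 'rV[R]_m, continuous g /\
      forall t, s i < t < s i.+1 -> u t = g t.

(* admissible controls: piecewise continuous functions R_{>=0} -> U
   (values at negative times are irrelevant) *)
Definition admissible (U : set 'rV[R]_m) (u : R -> 'rV[R]_m) : Prop :=
  piecewise_continuous u /\ forall t, 0 <= t -> U (u t).

Definition is_sol (f : 'rV[R]_n -> 'rV[R]_m -> 'rV[R]_n) (x : 'rV[R]_n)
  (u : R -> 'rV[R]_m) (T : R) (phi : R -> 'rV[R]_n) : Prop :=
  {within `[0, T], continuous phi} /\
  forall t, 0 <= t <= T -> forall i : 'I_n,
    phi t ord0 i = x ord0 i
      + \int[@lebesgue_measure R]_(s in `[0, t]) (f (phi s) (u s) ord0 i).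

Definition nbhd_set (eps : R) (Q : set 'rV[R]_n) : set 'rV[R]_n :=
  [set y | exists2 x, Q x & enorm (x - y) <= eps].

Definition controlled_invariant (f : 'rV[R]_n -> 'rV[R]_m -> 'rV[R]_n)
  (U : set 'rV[R]_m) (Q : set 'rV[R]_n) : Prop :=
  forall x, Q x -> exists u, admissible U u /\ exists phi : R -> 'rV[R]_n,
    (forall T, 0 <= T -> is_sol f x u T phi) /\ forall t, 0 <= t -> Q (phi t).

Definition stays_near f (x : 'rV[R]_n) u (T eps : R) Q : Prop :=
  exists phi, is_sol f x u T phi /\
    forall t, 0 <= t <= T -> nbhd_set eps Q (phi t).

Definition recurrent f (x : 'rV[R]_n) u (T eps tau : R) Q : Prop :=
  exists phi, is_sol f x u T phi /\
    forall t, 0 <= t <= T - tau ->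
      exists2 t', t <= t' <= t + tau & nbhd_set eps Q (phi t').

Local Open Scope ereal_scope.

(* minimal cardinality of a finite family of admissible controls with property
   P (for each x in Q some member works); +oo if there is none *)
Definition min_card (U : set 'rV[R]_m) (Q : set 'rV[R]_n)
  (P : 'rV[R]_n -> (R -> 'rV[R]_m) -> Prop) : \bar R :=
  ereal_inf [set (k%:R)%:E | k in
    [set k : nat | exists us : 'I_k -> (R -> 'rV[R]_m),
       (forall j, admissible U (us j)) /\
       forall x, Q x -> exists j, P x (us j)]].

Definition r_inv f U (T eps : R) Q : \bar R :=
  min_card U Q (fun x u => stays_near f x u T eps Q).

Definition r_rec f U (T eps tau : R) Q : \bar R :=
  min_card U Q (fun x u => recurrent f x u T eps tau Q).

Definition elog2 (r : \bar R) : \bar R :=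
  match r with
  | r'%:E => if (r' <= 0)%R then -oo else ((ln r' / ln 2)%R)%:E
  | +oo => +oo
  | -oo => -oo
  end.

Definition limsup_T (g : R -> \bar R) : \bar R := limf_esup g (pinfty_nbhs R).

Definition h_inv f U Q : \bar R :=
  lim ((fun eps => limsup_T (fun T => (T^-1)%:E * elog2 (r_inv f U T eps Q)))
         @ 0^'+).

Definition h_rec f U (tau : R) Q : \bar R :=
  lim ((fun eps =>
          limsup_T (fun T => (T^-1)%:E * elog2 (r_rec f U T eps tau Q)))
         @ 0^'+).

End ControlEntropy.

(* Main.v *)
Require Import Defs.
From HB Require Import structures.
From mathcomp Require Import all_boot all_order all_algebra.
From mathcomp Require Import all_classical all_reals all_analysis.
From mathcomp Require Import ring lra measurable_realfun.
Import Order.TTheory GRing.Theory Num.Theory.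
Import numFieldNormedType.Exports.
Local Open Scope classical_set_scope.
Local Open Scope ring_scope.
Section Part1.
Variables (R : realType) (n m : nat).
Variables (f : 'rV[R]_n -> 'rV[R]_m -> 'rV[R]_n) (U : set 'rV[R]_m) (Q : set 'rV[R]_n).
Local Open Scope ereal_scope.

Lemma min_card_le (P P' : 'rV[R]_n -> (R -> 'rV[R]_m) -> Prop) :
  (forall x u, Q x -> admissible U u -> P x u -> P' x u) ->
  min_card U Q P' <= min_card U Q P.
Proof.
move=> PP'; apply: le_ereal_inf => _ [k [us [adm cov]] <-]; exists k => //.
exists us; split => // x Qx; have [j Pj] := cov x Qx; exists j; exact: PP'.
Qed.

Lemma elog2_le (a b : \bar R) : a <= b -> elog2 a <= elog2 b.
Proof.
case: a => [r| |]; case: b => [s| |] //=; rewrite ?leey ?leNye //.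
- rewrite lee_fin => rs; case: ifP => r0; rewrite ?leNye //.
  have s0 : (0 < s)%R by apply: lt_le_trans rs; rewrite ltNge r0.
  rewrite ifF; last by apply/negbTE; rewrite -ltNge.
  rewrite lee_fin ler_wpM2r // ?invr_ge0 ?ln_ge0 ?ler1n //.
  by rewrite ler_ln // posrE // ltNge r0.
Qed.

Lemma limsup_T_le (g h : R -> \bar R) :
  (\forall T \near +oo%R, g T <= h T) -> limsup_T g <= limsup_T h.
Proof.
move=> ghF; set W := [set T | g T <= h T].
have WF : pinfty_nbhs R W := ghF.
have gh : forall x, W x -> g x <= h x by [].
rewrite /limsup_T /limf_esup.
apply: le_ereal_inf_tmp => _ [V VF <-].
have WV : pinfty_nbhs R (W `&` V) by apply: filterI.
apply: ge_ereal_inf; exists (ereal_sup (g @` (W `&` V))); first by exists (W `&` V).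
apply: ge_ereal_sup => _ [x [Wx Vx] <-].
apply: le_trans (gh x Wx) _; apply: ereal_sup_ubound; by exists x.
Qed.

Definition aT (T : R) (r : \bar R) := (T^-1)%:E * elog2 r.

Lemma aT_le T r s : (0 < T)%R -> r <= s -> aT T r <= aT T s.
Proof.
move=> T0 rs; rewrite /aT; apply: lee_wpmul2l; first by rewrite lee_fin invr_ge0 ltW.
exact: elog2_le.
Qed.

End Part1.
Arguments aT {R}.
Section Part2.
Variables (R : realType) (n m : nat).
Variables (f : 'rV[R]_n -> 'rV[R]_m -> 'rV[R]_n) (U : set 'rV[R]_m) (Q : set 'rV[R]_n).
Local Open Scope ereal_scope.

Lemma limsup_T_pos_le (g h : R -> \bar R) :
  (forall T, (0 < T)%R -> g T <= h T) -> limsup_T g <= limsup_T h.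
Proof. by move=> gh; apply: limsup_T_le; exists 0%R; split => // x /gh. Qed.

Definition Hf (e : R) := limsup_T (fun T => aT T (r_inv f U T e Q)).
Definition Gf (tau e : R) := limsup_T (fun T => aT T (r_rec f U T e tau Q)).

Lemma nbhd_set_le (e e' : R) y : (e <= e')%R -> nbhd_set e Q y -> nbhd_set e' Q y.
Proof. by move=> ee' [x Qx xy]; exists x => //; apply: le_trans ee'. Qed.

Lemma Hf_noninc : {in `]0%R, +oo[ &, nonincreasing_fun Hf}.
Proof.
move=> e e' _ _ ee'; apply: limsup_T_pos_le => T T0; apply: aT_le => //.
apply: min_card_le => x u _ _ [phi [sol nb]]; exists phi; split => // t /nb.
exact: nbhd_set_le.
Qed.

Lemma Gf_noninc tau : {in `]0%R, +oo[ &, nonincreasing_fun (Gf tau)}.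
Proof.
move=> e e' _ _ ee'; apply: limsup_T_pos_le => T T0; apply: aT_le => //.
apply: min_card_le => x u _ _ [phi [sol nb]]; exists phi; split => // t /nb.
by case=> t' tt' /(nbhd_set_le _ _ _ ee') ?; exists t'.
Qed.

Lemma Gf_le_Hf tau e : (0 <= tau)%R -> Gf tau e <= Hf e.
Proof.
move=> tau0; apply: limsup_T_pos_le => T T0; apply: aT_le => //.
apply: min_card_le => x u _ _ [phi [sol nb]]; exists phi; split => // t /andP[t0 tT].
exists t; first by rewrite lexx lerDl.
apply: nb; rewrite t0 /=; apply: le_trans tT _; by rewrite gerBl.
Qed.

Lemma Gf_tau_le tau tau' e : (tau <= tau')%R -> Gf tau' e <= Gf tau e.
Proof.
move=> tt'; apply: limsup_T_pos_le => T T0; apply: aT_le => //.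
apply: min_card_le => x u _ _ [phi [sol nb]]; exists phi; split => // t /andP[t0 tT].
have [|t'' /andP[h1 h2] nbt] := nb t.
  by rewrite t0 /=; apply: le_trans tT _; rewrite lerB.
by exists t'' => //; rewrite h1 /=; apply: le_trans h2 _; rewrite lerD.
Qed.

Lemma h_inv_sup : h_inv f U Q = ereal_sup (Hf @` `]0%R, +oo[).
Proof.
apply/cvg_lim => //; exact: (@nonincreasing_at_right_cvge R Hf 0%R (BInfty _ false) isT Hf_noninc).
Qed.

Lemma h_rec_sup tau : h_rec f U tau Q = ereal_sup (Gf tau @` `]0%R, +oo[).
Proof.
apply/cvg_lim => //; exact: (@nonincreasing_at_right_cvge R (Gf tau) 0%R (BInfty _ false) isT (Gf_noninc tau)).
Qed.

End Part2.
Section Part3.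
Variables (R : realType) (n m : nat).
Variables (f : 'rV[R]_n -> 'rV[R]_m -> 'rV[R]_n) (U : set 'rV[R]_m) (Q : set 'rV[R]_n).
Hypothesis key : forall e : R, 0 < e -> exists2 t0 : R, 0 < t0 &
  forall tau T : R, 0 < tau -> tau <= t0 -> 0 < T -> forall x u, Q x ->
  admissible U u -> recurrent f x u T e tau Q -> stays_near f x u T (2 * e) Q.
Local Open Scope ereal_scope.

Lemma main_from_key : h_rec f U tau Q @[tau --> 0%R^'+] --> h_inv f U Q.
Proof.
have hnoninc : {in `]0%R, +oo[ &, nonincreasing_fun (fun tau => h_rec f U tau Q)}.
  move=> t t' t0 _ tt'; rewrite !h_rec_sup; apply: ge_ereal_sup => _ [e e0 <-].
  apply: le_trans (Gf_tau_le _ _ _ _ _ _ _ _ e tt') _; apply: ereal_sup_ubound; by exists e.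
have := @nonincreasing_at_right_cvge R (fun tau => h_rec f U tau Q) 0%R (BInfty _ false) isT hnoninc.
suff -> : h_inv f U Q = ereal_sup ((fun tau => h_rec f U tau Q) @` `]0%R, +oo[) by [].
apply/eqP; rewrite eq_le; apply/andP; split.
  rewrite h_inv_sup; apply: ge_ereal_sup => _ [e e0 <-].
  have e20 : (0 < e / 2)%R by rewrite divr_gt0 //; move: e0; rewrite /= in_itv /= andbT.
  have [t0 t00 kt] := key (e / 2) e20.
  have -> : Hf R n m f U Q e = Hf R n m f U Q (2 * (e / 2)) by rewrite mulrC divfK.
  apply: (@le_trans _ _ (Gf R n m f U Q t0 (e / 2))).
    apply: limsup_T_pos_le => T T0; apply: aT_le => //.
    apply: min_card_le => x u Qx adm; exact: (kt t0 T t00 (lexx _) T0 x u Qx adm).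
  apply: (@le_trans _ _ (h_rec f U t0 Q)).
    rewrite h_rec_sup; apply: ereal_sup_ubound; exists (e / 2)%R => //.
    by rewrite /= in_itv /= e20.
  apply: ereal_sup_ubound; exists t0 => //; by rewrite /= in_itv /= t00.
apply: ge_ereal_sup => _ [t t0 <-]; rewrite h_rec_sup h_inv_sup.
apply: ge_ereal_sup => _ [e e0 <-]; apply: le_trans (Gf_le_Hf R n m f U Q t e _) _.
  by move: t0; rewrite /= in_itv /= andbT => /ltW.
apply: ereal_sup_ubound; by exists e.
Qed.
End Part3.
Section Norms.
Variable R : realType.
Implicit Types k : nat.

Lemma entry_le_norm {k : nat} (v : 'rV[R]_k) i : `|v ord0 i| <= `|v|.
Proof.
have /mapP[j Hj ->] : `|v ord0 i| \in [seq `|v x.1 x.2| | x : 'I_1 * 'I_k].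
  by apply/mapP; exists (ord0, i) => //=; rewrite mem_enum.
by rewrite [leRHS]/Num.norm /= mx_normrE; apply/bigmax_geP; right => /=; exists j.
Qed.

Lemma norm_le_bound {k : nat} (v : 'rV[R]_k) c : 0 <= c ->
  (forall i, `|v ord0 i| <= c) -> `|v| <= c.
Proof.
move=> c0 vc; rewrite [leLHS]/Num.norm /= mx_normrE; apply/bigmax_leP; split => //.
by case=> i j _ /=; rewrite (ord1 i); exact: vc.
Qed.

Lemma enorm_ge0 {k} (v : 'rV[R]_k) : 0 <= enorm v.
Proof. exact: sqrtr_ge0. Qed.

Lemma sum_sq_ge0 {k} (v : 'rV[R]_k) : 0 <= \sum_(i < k) (v ord0 i) ^+ 2.
Proof. by apply: sumr_ge0 => i _; exact: sqr_ge0. Qed.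

Lemma entry_le_enorm {k} (v : 'rV[R]_k) i : `|v ord0 i| <= enorm v.
Proof.
rewrite /enorm -(sqrtr_sqr (v ord0 i)) ler_sqrt ?sum_sq_ge0 //.
rewrite (bigD1 i) //= lerDl; apply: sumr_ge0 => j _; exact: sqr_ge0.
Qed.

Lemma enorm_le_sum {k} (v : 'rV[R]_k) : enorm v <= \sum_(i < k) `|v ord0 i|.
Proof.
have s0 : 0 <= \sum_(i < k) `|v ord0 i| by apply: sumr_ge0.
rewrite /enorm -(ger0_norm s0) -sqrtr_sqr ler_sqrt ?sqr_ge0 //.
rewrite expr2 mulr_suml; apply: ler_sum => i _.
rewrite -real_normK ?num_real // expr2 ler_wpM2l //.
rewrite (bigD1 i) //= lerDl; exact: sumr_ge0.
Qed.

Lemma norm_le_enorm {k} (v : 'rV[R]_k) : `|v| <= enorm v.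
Proof. apply: norm_le_bound; [exact: enorm_ge0 | exact: entry_le_enorm]. Qed.

Lemma enorm_le_norm {k} (v : 'rV[R]_k) : enorm v <= k%:R * `|v|.
Proof.
apply: (@le_trans _ _ (\sum_(i < k) `|v ord0 i|)); first exact: enorm_le_sum.
have -> : k%:R * `|v| = \sum_(i < k) `|v| by rewrite sumr_const card_ord mulr_natl.
apply: ler_sum => i _; exact: entry_le_norm.
Qed.

Lemma enorm0 {k} : enorm (0 : 'rV[R]_k) = 0.
Proof.
rewrite /enorm big1 ?sqrtr0 // => i _; by rewrite mxE expr0n.
Qed.

Lemma enormN {k} (v : 'rV[R]_k) : enorm (- v) = enorm v.
Proof. by rewrite /enorm; congr Num.sqrt; apply: eq_bigr => i _; rewrite mxE sqrrN. Qed.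

Lemma enormB {k} (a b : 'rV[R]_k) : enorm (a - b) = enorm (b - a).
Proof. by rewrite -enormN opprB. Qed.

Lemma sum_sq_eq0 {k} (v : 'rV[R]_k) : \sum_(i < k) (v ord0 i) ^+ 2 = 0 -> forall i, v ord0 i = 0.
Proof.
move=> /eqP; rewrite psumr_eq0 => [/allP H i|i _]; last exact: sqr_ge0.
by have := H i (mem_index_enum i); rewrite /= sqrf_eq0 => /eqP.
Qed.

Lemma cs_aux {k} (a b : 'rV[R]_k) :
  \sum_(i < k) (a ord0 i * b ord0 i) <= enorm a * enorm b.
Proof.
set A := enorm a; set B := enorm b.
have A2 : A ^+ 2 = \sum_(i < k) (a ord0 i) ^+ 2 by rewrite sqr_sqrtr // sum_sq_ge0.
have B2 : B ^+ 2 = \sum_(i < k) (b ord0 i) ^+ 2 by rewrite sqr_sqrtr // sum_sq_ge0.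
have [A0|A0] := eqVneq A 0.
  have az : forall i, a ord0 i = 0 by apply: sum_sq_eq0; rewrite -A2 A0 expr0n.
  by rewrite big1 ?A0 ?mul0r // => i _; rewrite az mul0r.
have [B0|B0] := eqVneq B 0.
  have bz : forall i, b ord0 i = 0 by apply: sum_sq_eq0; rewrite -B2 B0 expr0n.
  by rewrite big1 ?B0 ?mulr0 // => i _; rewrite bz mulr0.
have Ap : 0 < A by rewrite lt_neqAle eq_sym A0 enorm_ge0.
have Bp : 0 < B by rewrite lt_neqAle eq_sym B0 enorm_ge0.
set t := B / A.
have tp : 0 < t by rewrite divr_gt0.
have key i : 2 * (a ord0 i * b ord0 i) <= t * (a ord0 i) ^+ 2 + t^-1 * (b ord0 i) ^+ 2.
  rewrite -subr_ge0.
  have -> : t * a ord0 i ^+ 2 + t^-1 * b ord0 i ^+ 2 - 2 * (a ord0 i * b ord0 i)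
     = t^-1 * (t * a ord0 i - b ord0 i) ^+ 2.
    by field; rewrite gt_eqF.
  by rewrite mulr_ge0 ?sqr_ge0 // invr_ge0 ltW.
have : \sum_(i < k) 2 * (a ord0 i * b ord0 i) <=
    \sum_(i < k) (t * (a ord0 i) ^+ 2 + t^-1 * (b ord0 i) ^+ 2).
  by apply: ler_sum => i _; exact: key.
rewrite -mulr_sumr big_split /= -!mulr_sumr -A2 -B2 /t.
have -> : B / A * A ^+ 2 + (B / A)^-1 * B ^+ 2 = 2 * (A * B).
  by field; rewrite !gt_eqF.
by rewrite ler_pM2l.
Qed.

Lemma enormD {k} (a b : 'rV[R]_k) : enorm (a + b) <= enorm a + enorm b.
Proof.
have s0 : 0 <= enorm a + enorm b by rewrite addr_ge0 ?enorm_ge0.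
rewrite /enorm -[X in _ <= X]ger0_norm //.
rewrite -sqrtr_sqr ler_sqrt ?sqr_ge0 //.
rewrite sqrrD !sqr_sqrtr ?sum_sq_ge0 //.
have -> : \sum_(i < k) (a + b) ord0 i ^+ 2 = \sum_(i < k) (a ord0 i) ^+ 2
   + (\sum_(i < k) (a ord0 i * b ord0 i)) *+ 2 + \sum_(i < k) (b ord0 i) ^+ 2.
  rewrite -sumrMnl -!big_split /=; apply: eq_bigr => i _; by rewrite mxE sqrrD.
by rewrite lerD2r lerD2l lerMn2r /=; apply: cs_aux.
Qed.

Lemma enorm_tri3 {k} (a b c : 'rV[R]_k) : enorm (a - c) <= enorm (a - b) + enorm (b - c).
Proof. by have := enormD (a - b) (b - c); rewrite addrA subrK. Qed.

End Norms.
Arguments entry_le_norm {R k}. Arguments norm_le_bound {R k}. Arguments enorm_ge0 {R k}.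
Arguments sum_sq_ge0 {R k}. Arguments entry_le_enorm {R k}. Arguments enorm_le_sum {R k}.
Arguments norm_le_enorm {R k}. Arguments enorm_le_norm {R k}. Arguments enorm0 {R k}.
Arguments enormN {R k}. Arguments enormB {R k}. Arguments sum_sq_eq0 {R k}.
Arguments cs_aux {R k}. Arguments enormD {R k}. Arguments enorm_tri3 {R k}.
Section Cont.
Variables (R : realType) (n m : nat).
Variables (f : 'rV[R]_n -> 'rV[R]_m -> 'rV[R]_n).

Definition Fp (p : 'rV[R]_n * 'rV[R]_m) := f p.1 p.2.

Lemma lipschitz_cont : locally_lipschitz f -> continuous Fp.
Proof.
move=> fL [x0 u0]; have [d [L [d0 H]]] := fL x0 u0.
apply/cvgrPdist_le => e e0.
set D : R := (n + m)%:R; set c : R := D * (`|L| + 1) + 1.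
have D0 : 0 <= D by rewrite /D ler0n.
have c0 : 0 < c by rewrite /c ltr_wpDl // mulr_ge0 // addr_ge0.
set mn := Num.min d e.
have mn0 : 0 < mn by rewrite lt_min d0 e0.
set r := mn / c.
have r0 : 0 < r by rewrite divr_gt0.
have Drmn : D * r <= mn.
  rewrite /r mulrA ler_pdivrMr // mulrC ler_wpM2l ?ltW //.
  have := normr_ge0 L; rewrite /c; nra.
have LDrmn : `|L| * (D * r) <= mn.
  rewrite /r !mulrA ler_pdivrMr // mulrC ler_wpM2l ?ltW //.
  have := normr_ge0 L; rewrite /c; nra.
have c1 : \forall p \near (x0, u0), `|x0 - p.1| < r.
  have Hf : fst @ nbhs (x0, u0) --> x0 by apply: cvg_fst.
  exact: (proj1 (cvgrPdist_lt fst x0) Hf r r0).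
have c2 : \forall p \near (x0, u0), `|u0 - p.2| < r.
  have Hf : snd @ nbhs (x0, u0) --> u0 by apply: cvg_snd.
  exact: (proj1 (cvgrPdist_lt snd u0) Hf r r0).
near=> p.
have h1 : enorm (p.1 - x0) <= n%:R * r.
  apply: le_trans (enorm_le_norm _) _; rewrite ler_wpM2l // distrC ltW //; near: p; exact: c1.
have h2 : enorm (p.2 - u0) <= m%:R * r.
  apply: le_trans (enorm_le_norm _) _; rewrite ler_wpM2l // distrC ltW //; near: p; exact: c2.
have hD : enorm (p.1 - x0) + enorm (p.2 - u0) <= D * r.
  by rewrite /D natrD mulrDl; apply: lerD.
have hd : D * r <= d by apply: le_trans Drmn _; rewrite ge_min lexx.
have g1 := enorm_ge0 (p.1 - x0); have g2 := enorm_ge0 (p.2 - u0).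
have e1 : enorm (p.1 - x0) <= d by lra.
have e2 : enorm (p.2 - u0) <= d by lra.
have z1 : enorm (x0 - x0) <= d by rewrite subrr enorm0 ltW.
have z2 : enorm (u0 - u0) <= d by rewrite subrr enorm0 ltW.
have HL := H _ _ _ _ e1 z1 e2 z2.
rewrite /Fp /= distrC; apply: le_trans (norm_le_enorm _) _.
apply: le_trans HL _.
set s := enorm (p.1 - x0) + enorm (p.2 - u0).
have s0 : 0 <= s by rewrite addr_ge0.
have k1 : L * s <= `|L| * s := ler_wpM2r s0 (ler_norm L).
have k2 : `|L| * s <= `|L| * (D * r) := ler_wpM2l (normr_ge0 L) hD.
have k3 : mn <= e by rewrite ge_min lexx orbT.
by apply: le_trans k1 _; apply: le_trans k2 _; apply: le_trans LDrmn _.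
Unshelve. all: by end_near. Qed.

End Cont.
Arguments lipschitz_cont {R n m f}.
Section Bound.
Variables (R : realType) (n m : nat).
Variables (f : 'rV[R]_n -> 'rV[R]_m -> 'rV[R]_n) (U : set 'rV[R]_m).
Hypothesis fL : locally_lipschitz f.
Hypothesis Uc : compact U.

Lemma fbound (rad : R) : exists2 B : R, 0 <= B &
  forall y w, `|y| <= rad -> U w -> forall i, `|f y w ord0 i| <= B.
Proof.
set rho := `|rad| + 1.
have rho0 : 0 < rho by rewrite /rho ltr_pwDr.
set K := closed_ball (0 : 'rV[R]_n) rho.
have KE : K = [set y | `|0 - y| <= rho] by rewrite /K closed_ballE.
have Kc : compact K.
  apply: bounded_closed_compact; last exact: closed_ball_closed.
  exists rho; split; first exact: num_real.
  move=> M rM y; rewrite KE /= sub0r normrN => Ky; apply: le_trans Ky _; exact: ltW.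
have := continuous_compact (continuous_subspaceT (lipschitz_cont fL)) (compact_setX Kc Uc).
move=> /compact_bounded [M [_ HM]].
exists (`|M| + 1); first by rewrite addr_ge0.
move=> y w yr Uw i; apply: le_trans (entry_le_norm _ _) _.
have : `|M| + 1 > M by apply: le_lt_trans (ler_norm M) _; rewrite ltrDl.
move=> /HM; apply; exists (y, w) => //; split => //.
rewrite KE /= sub0r normrN; apply: le_trans yr _; rewrite /rho.
apply: le_trans (ler_norm rad) _; rewrite lerDl //.
Qed.

End Bound.
Arguments fbound {R n m f U}.
Section Meas.
Variables (R : realType) (n m : nat).
Variables (f : 'rV[R]_n -> 'rV[R]_m -> 'rV[R]_n).
Hypothesis fL : locally_lipschitz f.

Lemma H2_within (D : set R) (phi : R -> 'rV[R]_n) (g : R -> 'rV[R]_m) i :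
  {within D, continuous phi} -> continuous g ->
  {within D, continuous (fun s => f (phi s) (g s) ord0 i)}.
Proof.
move=> pc gc; apply/subspace_continuousP => x Dx.
have p1 : phi @ within D (nbhs x) --> phi x by move/subspace_continuousP : pc; apply.
have g1 : g @ within D (nbhs x) --> g x.
  by move: (@continuous_subspaceT _ _ D _ gc) => /subspace_continuousP; apply.
have pg : (phi s, g s) @[s --> within D (nbhs x)] --> (phi x, g x) by exact: (cvg_pair p1 g1).
have H : (fun s => f (phi s) (g s)) @ within D (nbhs x) --> f (phi x) (g x).
  exact: (@cvg_comp _ _ _ (fun s => (phi s, g s)) (Fp R n m f) (within D (nbhs x)) (nbhs (phi x, g x)) (nbhs (f (phi x) (g x))) pg (lipschitz_cont fL (phi x, g x))).
exact: (@cvg_comp _ _ _ (fun s => f (phi s) (g s)) (fun M : 'rV[R]_n => M ord0 i) (within D (nbhs x)) (nbhs (f (phi x) (g x))) (nbhs (f (phi x) (g x) ord0 i)) H (@coord_continuous R 1 n ord0 i _)).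
Qed.

End Meas.
Section Meas2.
Variables (R : realType) (n m : nat).
Variables (f : 'rV[R]_n -> 'rV[R]_m -> 'rV[R]_n).
Hypothesis fL : locally_lipschitz f.

Lemma meas_open_piece (phi : R -> 'rV[R]_n) (u g : R -> 'rV[R]_m) (a b T : R) i :
  `]a, b[ `<=` `[0, T] -> {within `[0, T], continuous phi} -> continuous g ->
  (forall t, a < t < b -> u t = g t) ->
  measurable_fun `]a, b[ (fun s => f (phi s) (u s) ord0 i).
Proof.
move=> sub pc gc ug.
apply: subspace_continuous_measurable_fun; first exact: measurable_itv.
apply: (@subspace_eq_continuous _ _ _ (fun s => f (phi s) (g s) ord0 i)).
  by move=> t; rewrite inE /= in_itv /= => /ug ->.
apply: H2_within => //; exact: continuous_subspaceW pc.
Qed.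

Lemma itv_cc_split (a b : R) : a <= b ->
  [set` `[a, b]] = [set` `]a, b[] `|` [set a] `|` [set b].
Proof.
move=> ab; apply/seteqP; split => t /=.
  rewrite !in_itv /= => /andP[hat htb].
  have [ta|ta] := eqVneq t a; first by left; right.
  have [tb'|tb'] := eqVneq t b; first by right.
  by left; left; rewrite !lt_neqAle hat htb eq_sym ta tb' andbT.
by rewrite !in_itv /= => -[[/andP[/ltW -> /ltW ->] //|->]|->]; rewrite lexx ?ab.
Qed.

Lemma meas_closed_piece (phi : R -> 'rV[R]_n) (u g : R -> 'rV[R]_m) (a b T : R) i :
  a <= b -> `[a, b] `<=` `[0, T] -> {within `[0, T], continuous phi} -> continuous g ->
  (forall t, a < t < b -> u t = g t) ->
  measurable_fun `[a, b] (fun s => f (phi s) (u s) ord0 i).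
Proof.
move=> ab sub pc gc ug; rewrite itv_cc_split //.
apply/measurable_funU; [| exact: measurable_set1 |split; last exact: measurable_fun_set1].
  by apply: measurableU; [exact: measurable_itv|exact: measurable_set1].
apply/measurable_funU; [exact: measurable_itv|exact: measurable_set1|split; last exact: measurable_fun_set1].
apply: (@meas_open_piece phi u g a b T i) gc ug => //.
by apply: subset_trans sub; rewrite itv_cc_split //; move=> t At; left; left.
Qed.

Lemma part_mono (s : nat -> R) k : (forall i, (i < k)%N -> s i < s i.+1) ->
  forall i j, (i <= j <= k)%N -> s i <= s j.
Proof.
move=> sinc i; elim => [|j IH] /andP[ij jk].
  by move: ij; rewrite leqn0 => /eqP ->.
move: ij; rewrite leq_eqVlt => /orP[/eqP -> //| ij].
apply: le_trans (IH _) (ltW (sinc _ jk)); by rewrite -ltnS ij ltnW.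
Qed.

Lemma part_cover (s : nat -> R) k r : (forall i, (i < k)%N -> s i < s i.+1) ->
  forall j, (j < k)%N -> s 0%N <= r <= s j.+1 -> exists2 i, (i <= j)%N & s i <= r <= s i.+1.
Proof.
move=> sinc; elim => [|j IH] jk /andP[s0r rsj].
  by exists 0%N => //; rewrite s0r.
have [rsj'|rsj'] := leP r (s j.+1).
  by have [i ij H] := IH (ltnW jk) (introT andP (conj s0r rsj')) ; exists i => //; rewrite ltnW.
by exists j.+1 => //; rewrite (ltW rsj') rsj.
Qed.

End Meas2.
Arguments part_mono {R s k}. Arguments part_cover {R s k r}.
Section Meas3.
Variables (R : realType) (n m : nat).
Variables (f : 'rV[R]_n -> 'rV[R]_m -> 'rV[R]_n).
Hypothesis fL : locally_lipschitz f.

Lemma meas_h (phi : R -> 'rV[R]_n) (u : R -> 'rV[R]_m) (T : R) i :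
  0 < T -> piecewise_continuous u -> {within `[0, T], continuous phi} ->
  measurable_fun `[0, T] (fun s => f (phi s) (u s) ord0 i).
Proof.
move=> T0 pcu pc; have [k [s [s0 [sk [sinc pieces]]]]] := pcu T T0.
have k0 : (0 < k)%N.
  by case: k sk {sinc pieces} => // sk; move: T0; rewrite -sk s0 ltxx.
have mono := part_mono sinc.
set E := fun j => if (j < k)%N then [set` `[s j, s j.+1]] else set0.
have -> : [set` `[0, T]] = \bigcup_j E j.
  apply/seteqP; split.
  - move=> r /=; rewrite in_itv /= => /andP[r0 rT].
    have kk : (k.-1 < k)%N by rewrite prednK.
    have [|i0 ik H] := part_cover (r := r) sinc _ kk; first by rewrite prednK // s0 sk r0 rT.
    exists i0 => //; rewrite /E ifT; last by apply: leq_ltn_trans ik kk.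
    by rewrite /= in_itv /= H.
  - move=> r [j _]; rewrite /E; case: ifP => // jk; rewrite /= !in_itv /= => /andP[h1 h2].
    apply/andP; split.
      by rewrite -s0; apply: le_trans h1; apply: mono; rewrite leq0n (ltnW jk).
    by rewrite -sk; apply: le_trans h2 _; apply: mono; rewrite jk leqnn.
apply/measurable_fun_bigcup.
  by move=> j; rewrite /E; case: ifP => _; [exact: measurable_itv|exact: measurable0].
move=> j; rewrite /E; case: ifP => jk; last exact: measurable_fun_set0.
have [g [gc ug]] := pieces j jk.
apply: (@meas_closed_piece R n m f fL phi u g _ _ T) => //.
  exact: ltW (sinc j jk).
move=> r /=; rewrite !in_itv /= => /andP[h1 h2]; apply/andP; split.
  by rewrite -s0; apply: le_trans h1; apply: mono; rewrite leq0n (ltnW jk).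
by rewrite -sk; apply: le_trans h2 _; apply: mono; rewrite jk leqnn.
Qed.

End Meas3.
Arguments meas_h {R n m f}.
Section Integ.
Variables (R : realType) (n m : nat).
Variables (f : 'rV[R]_n -> 'rV[R]_m -> 'rV[R]_n) (U : set 'rV[R]_m).
Hypothesis fL : locally_lipschitz f.
Hypothesis Uc : compact U.
Notation mu := (@lebesgue_measure R).

Lemma integ_h (phi : R -> 'rV[R]_n) (u : R -> 'rV[R]_m) (T : R) i :
  0 < T -> admissible U u -> {within `[0, T], continuous phi} ->
  mu.-integrable `[0, T] (EFin \o (fun s => f (phi s) (u s) ord0 i)).
Proof.
move=> T0 [pcu uU] pc.
apply: measurable_bounded_integrable; first exact: measurable_itv.
- by have := lebesgue_measure_itv `[0, T]; rewrite /= => ->; rewrite lte_fin T0 ltry.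
- exact: meas_h.
have sc : compact [set` `[0, T]] := @segment_compact R 0 T.
have := compact_bounded (continuous_compact pc sc).
move=> [M [_ HM]].
have [B B0 HB] := fbound fL Uc (`|M| + 1).
exists B; split; first exact: num_real.
move=> M' BM' r; rewrite /= in_itv /= => /andP[r0 rT].
apply: le_trans (HB _ _ _ (uU _ r0) i) (ltW BM').
have : `|M| + 1 > M by apply: le_lt_trans (ler_norm M) _; rewrite ltrDl.
move=> /HM; apply; exists r => //=; by rewrite in_itv /= r0 rT.
Qed.

Lemma sol_diff (x : 'rV[R]_n) (phi : R -> 'rV[R]_n) (u : R -> 'rV[R]_m) (T a b : R) i :
  0 < T -> admissible U u -> is_sol f x u T phi -> 0 <= a -> a <= b -> b <= T ->
  phi b ord0 i - phi a ord0 i = \int[mu]_(s in `]a, b]) f (phi s) (u s) ord0 i.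
Proof.
move=> T0 adm [pc sol] a0 ab bT.
rewrite (sol b) ?(le_trans a0 ab) ?bT // (sol a) ?a0 ?(le_trans ab bT) //.
rewrite opprD addrACA subrr add0r.
rewrite (@Rintegral_itvB R (fun s => f (phi s) (u s) ord0 i) (BLeft 0) (BRight b) a) //.
- apply: integrableS (@integ_h phi u T i T0 adm pc) => //.
  by move=> s /=; rewrite !in_itv /= => /andP[-> h]; rewrite (le_trans h bT).
Qed.

Lemma int_bound (phi : R -> 'rV[R]_n) (u : R -> 'rV[R]_m) (T a b B : R) i :
  0 < T -> admissible U u -> {within `[0, T], continuous phi} -> 0 <= a -> a <= b -> b <= T ->
  (forall s, a < s <= b -> `|f (phi s) (u s) ord0 i| <= B) ->
  `|\int[mu]_(s in `]a, b]) f (phi s) (u s) ord0 i| <= B * (b - a).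
Proof.
move=> T0 adm pc a0 ab bT HB.
have iab : mu.-integrable `]a, b] (EFin \o (fun s => f (phi s) (u s) ord0 i)).
  apply: integrableS (@integ_h phi u T i T0 adm pc) => //.
  by move=> s /=; rewrite !in_itv /= => /andP[h1 h2]; rewrite (le_trans a0 (ltW h1)) (le_trans h2 bT).
have mufin : (mu `]a, b] < +oo)%E.
  by have := lebesgue_measure_itv `]a, b]; rewrite /= => ->; case: ifP => _; rewrite ?ltry.
have icst : mu.-integrable `]a, b] (EFin \o (fun _ : R => B)).
  apply: measurable_bounded_integrable => //.
  exists `|B|; split; first exact: num_real.
  by move=> M BM s _; rewrite /= ltW // (le_lt_trans (ler_norm B)).
apply: (le_trans (le_normr_Rintegral _ iab)); first exact: measurable_itv.
apply: (le_trans (le_Rintegral _ (integrable_norm iab) icst _)); first exact: measurable_itv.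
  by move=> s /=; rewrite in_itv /= => /HB.
rewrite Rintegral_cst //.
have := lebesgue_measure_itv `]a, b]; rewrite /= => ->.
case: ifP => /=; first by rewrite lexx.
rewrite lte_fin => ba.
have -> : a = b by apply/eqP; rewrite eq_le ab leNgt ba.
by rewrite subrr.
Qed.

End Integ.
Arguments sol_diff {R n m f U}. Arguments int_bound {R n m f U}. Arguments integ_h {R n m f U}.
Section Key1.
Variables (R : realType) (n : nat).

Lemma phi_cont_eps (phi : R -> 'rV[R]_n) (D : set R) r eps :
  {within D, continuous phi} -> D r -> 0 < eps ->
  exists2 d, 0 < d & forall s, D s -> `|r - s| < d -> enorm (phi s - phi r) < eps.
Proof.
move=> pc Dr e0.
have H1 : phi @ within D (nbhs r) --> phi r by move/subspace_continuousP : pc; apply.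
have n1 : 0 < n%:R + 1 :> R by rewrite ltr_wpDl.
set e' := eps / (n%:R + 1).
have e'0 : 0 < e' by rewrite divr_gt0.
have := proj1 (cvgrPdist_lt phi (phi r)) H1 e' e'0.
move=> /(_ (within_filter _ _)); rewrite near_withinE => /(proj1 (nbhs_ballP _ _)) [d /= d0 Hd].
exists d => // s Ds rs.
have := Hd s; rewrite /ball /= => /(_ rs Ds) ps.
apply: le_lt_trans (enorm_le_norm _) _.
have : n%:R * `|phi s - phi r| <= n%:R * e'.
  by rewrite ler_wpM2l // distrC ltW.
move/le_lt_trans; apply; rewrite /e' mulrA ltr_pdivrMr //.
have : 0 <= n%:R :> R by [].
nra.
Qed.

End Key1.
Arguments phi_cont_eps {R n phi D r eps}.
Section Key.
Variables (R : realType) (n m : nat).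
Variables (f : 'rV[R]_n -> 'rV[R]_m -> 'rV[R]_n) (U : set 'rV[R]_m) (Q : set 'rV[R]_n).
Hypothesis fL : locally_lipschitz f.
Hypothesis Uc : compact U.
Hypothesis Qc : compact Q.

Lemma sol0 x u T phi : 0 <= T -> is_sol f x u T phi -> phi 0 = x.
Proof.
move=> T0 [_ sol]; apply/rowP => i.
by rewrite sol ?lexx ?T0 // set_itv1 Rintegral_set1 addr0.
Qed.

Lemma key_lemma e : 0 < e -> exists2 t0 : R, 0 < t0 &
  forall tau T : R, 0 < tau -> tau <= t0 -> 0 < T -> forall x u, Q x ->
  admissible U u -> recurrent f x u T e tau Q -> stays_near f x u T (2 * e) Q.
Proof.
move=> e0.
have [MQ MQ0 HQ] : exists2 MQ : R, 0 <= MQ & forall q, Q q -> `|q| <= MQ.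
  have [M [_ HM]] := compact_bounded Qc.
  exists (`|M| + 1); first by rewrite addr_ge0.
  move=> q Qq; have : `|M| + 1 > M by apply: le_lt_trans (ler_norm M) _; rewrite ltrDl.
  by move=> /HM; apply.
set rad := MQ + 2 * e.
have [B B0 HB] := fbound fL Uc rad.
set C := n%:R * B.
have C0 : 0 <= C by rewrite mulr_ge0.
have C10 : 0 < C + 1 by rewrite ltr_wpDl.
set t0 := (e / 4) / (C + 1).
have e40 : 0 < e / 4 by rewrite divr_gt0.
have t00 : 0 < t0 by rewrite divr_gt0.
have Ct0 : C * t0 <= e / 4.
  rewrite /t0 mulrCA ler_piMr ?ltW //.
  by rewrite ltr_pdivrMr // mul1r ltrDl.
exists t0 => // tau T tau0 taut0 T0 x u Qx adm [phi [sol nb]].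
exists phi; split => //.
have pc := sol.1.
have uU := adm.2.
have phi0 := @sol0 x u T phi (ltW T0) sol.
have Ctau : C * tau <= e / 4 := le_trans (ler_wpM2l C0 taut0) Ct0.
have bound_in : forall y, nbhd_set (2 * e) Q y -> `|y| <= rad.
  move=> y [q Qq qy]; rewrite /rad.
  have -> : y = q + (y - q) by rewrite addrC subrK.
  apply: le_trans (ler_normD _ _) _; apply: lerD; first exact: HQ.
  by apply: le_trans (norm_le_enorm _) _; rewrite enormB.
move=> t /andP[tge0 tT].
have [t' /andP[t'0 t't] [tt' Nt']] : exists2 t', 0 <= t' <= t &
    (t - t' <= tau /\ nbhd_set e Q (phi t')).
  have [taut|taut] := leP tau t.
    have [|s /andP[h1 h2] Ns] := nb (t - tau).
      by apply/andP; split; lra.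
    by exists s; [apply/andP; split; lra | split => //; lra].
  exists 0; first by rewrite lexx tge0.
  split; first lra.
  by exists x => //; rewrite phi0 subrr enorm0 ltW.
set c := 2 * e - e / 4.
have [[q Qq qt]|Hn] := pselect (exists2 q, Q q & enorm (q - phi t) < c).
  by exists q => //; apply: ltW; apply: lt_le_trans qt _; rewrite /c; lra.
exfalso.
set A := [set r | t' <= r <= t /\ ~ (exists2 q, Q q & enorm (q - phi r) < c)].
have At : A t by split => //; rewrite t't lexx.
have Alb : has_lbound A by exists t' => r [/andP[]].
have Ane : nonempty A by exists t.
have Ainf : has_inf A by split.
set rs := inf A.
have t'rs : t' <= rs by apply: lb_le_inf => // r [/andP[]].
have rst : rs <= t by apply: (ge_inf Alb).
have DT r : 0 <= r <= T -> [set` `[0, T]] r by move=> h; rewrite /= in_itv /=.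
have C2 : ~ (exists2 q, Q q & enorm (q - phi rs) < c).
  move=> [q Qq qrs].
  have cpos : 0 < c - enorm (q - phi rs) by rewrite subr_gt0.
  have [d d0 Hd] := phi_cont_eps pc (DT rs (introT andP (conj (le_trans t'0 t'rs) (le_trans rst tT)))) cpos.
  have [a Aa ars] := inf_adherent d0 Ainf.
  have rsa : rs <= a := ge_inf Alb Aa.
  case: Aa => /andP[h1 h2] Na; apply: Na; exists q => //.
  have := Hd a (DT a (introT andP (conj (le_trans t'0 h1) (le_trans h2 tT)))).
  have hd : `|rs - a| < d by rewrite distrC ger0_norm ?subr_ge0 //; lra.
  move=> /(_ hd) H.
  apply: le_lt_trans (enorm_tri3 q (phi rs) (phi a)) _.
  rewrite (enormB (phi rs)); lra.
have C1 : forall r, t' <= r -> r < rs -> exists2 q, Q q & enorm (q - phi r) < c.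
  move=> r h1 h2; have [//|Hr] := pselect (exists2 q, Q q & enorm (q - phi r) < c).
  have : A r by split => //; apply/andP; split; lra.
  by move=> /(ge_inf Alb); lra.
have C3 : forall s, t' < s <= rs -> `|phi s| <= rad.
  move=> s /andP[h1 h2]; apply: bound_in.
  have [srs|srs] := ltP s rs.
    have [q Qq qs] := C1 s (ltW h1) srs; exists q => //; apply: ltW; rewrite /c in qs; lra.
  have srs' : s = rs by apply/eqP; rewrite eq_le h2 srs.
  rewrite srs'.
  have [d d0 Hd] := phi_cont_eps pc (DT rs (introT andP (conj (le_trans t'0 t'rs) (le_trans rst tT)))) e40.
  set mu := Num.min (d / 2) ((rs - t') / 2).
  have mu0 : 0 < mu by rewrite lt_min; apply/andP; split; lra.
  have mu1 : mu <= d / 2 by rewrite ge_min lexx.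
  have mu2 : mu <= (rs - t') / 2 by rewrite ge_min lexx orbT.
  have k1 : t' <= rs - mu by lra.
  have k2 : rs - mu < rs by lra.
  have [q Qq qs] := C1 (rs - mu) k1 k2.
  have hd : `|rs - (rs - mu)| < d by rewrite opprB addrC subrK ger0_norm; lra.
  have k3 : 0 <= rs - mu <= T by apply/andP; split; lra.
  have H := Hd (rs - mu) (DT _ k3) hd.
  exists q => //.
  apply: le_trans (ltW (le_lt_trans (enorm_tri3 q (phi (rs - mu)) (phi rs)) _)) (lexx _).
  rewrite /c in qs; lra.
have Hdiff i : `|phi rs ord0 i - phi t' ord0 i| <= B * (rs - t').
  rewrite (sol_diff fL Uc x phi u T t' rs i T0 adm sol t'0 t'rs (le_trans rst tT)).
  apply: (int_bound fL Uc phi u T t' rs B i T0 adm pc t'0 t'rs (le_trans rst tT)).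
  move=> s /andP[h1 h2]; apply: HB; first exact: C3 (introT andP (conj h1 h2)).
  exact: uU (le_trans t'0 (ltW h1)).
have Hn2 : enorm (phi rs - phi t') <= C * (rs - t').
  apply: le_trans (enorm_le_sum _) _; rewrite /C -mulrA.
  have -> : n%:R * (B * (rs - t')) = \sum_(i < n) (B * (rs - t')).
    by rewrite sumr_const card_ord mulr_natl.
  by apply: ler_sum => i _; rewrite !mxE; exact: Hdiff.
have Hn3 : C * (rs - t') <= C * tau by apply: ler_wpM2l => //; lra.
case: Nt' => q' Qq' q't; apply: C2; exists q' => //.
apply: le_lt_trans (enorm_tri3 q' (phi t') (phi rs)) _.
rewrite (enormB (phi t')) /c; lra.
Qed.

End Key.

Theorem corollary1 (R : realType) (n m : nat)
  (f : 'rV[R]_n -> 'rV[R]_m -> 'rV[R]_n) (U : set 'rV[R]_m) (Q : set 'rV[R]_n) :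
  locally_lipschitz f -> compact U -> compact Q ->
  controlled_invariant f U Q ->
  (h_rec f U tau Q @[tau --> 0^'+] --> h_inv f U Q)%E.
Proof.
move=> fL Uc Qc _.
exact: (@main_from_key R n m f U Q (@key_lemma R n m f U Q fL Uc Qc)).
Qed.
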